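(* Fix a prior density $p_z$ on $\mathbb{R}^d$, an observation $x$, and $\beta>0$. Let $\mathcal{P}$ be the set of all generative models with prior $p_z$ and an arbitrary decoder (conditional density) $p_{x|z}$. For a variational density $q=q(\cdot|x)$ and a model $p\in\mathcal{P}$ with decoder $p_{x|z}$, define the $\beta$-VAE objective $$L(q,p)=\mathbb{E}_{q(z|x)}\log p_{x|z}(x|z)-\beta\,\mathrm{KL}\big(q(z|x)\,\Vert\,p_z(z)\big).$$ Let $R$ be a class of mixing transforms of the latent space that leave the prior invariant, i.e. $r\#p_z=p_z$ for all $r\in R$, with $r\in R\Rightarrow r^{-1}\in R$. For $p\in\mathcal{P}$ and $r\in R$, let $p_r\in\mathcal{P}$ be the model obtained by transforming the latents of $p$ by $r$, i.e. the model with prior $p_z$ and decoder $z\mapsto p_{x|z}(x|r(z))$. Let $\mathcal{Q}$ be a variational family and suppose $(q^*,p^* )$ satisfies $L(q^*,p^* )=\max_{q\in\mathcal{Q},\,p\in\mathcal{P}}L(q,p)$. Let $\widetilde{\mathcal{Q}}=\{r\#q:\ q\in\mathcal{Q},\ r\in R\}\cup\mathcal{Q}$. Suppose that $\mathcal{Q}$ is such that $q\in\mathcal{Q}\Rightarrow r\#q\notin\mathcal{Q}$ for all $r\in R$, and that $\arg\max_{q\in\widetilde{\mathcal{Q}}}L(q,p^* )$ is unique. Then for $r\in R$, $\max_{q\in\mathcal{Q}}L(q,p^*_r)<L(q^*,p^* )$.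
   Context: For a measurable map $f$ and a distribution $q$, $f\#q$ denotes the pushforward distribution of $q$ under $f$ (the distribution of $f(z)$ for $z\sim q$). ''Mixing transforms'' are invertible maps of the latent space that mix the latent coordinates (their Jacobian has nonzero off-diagonal entries) and have Jacobian determinant of absolute value 1. *)

(* Defs.v *)
From HB Require Import structures.
From mathcomp Require Import all_boot all_order all_algebra.
From mathcomp Require Import all_classical all_reals all_analysis.
Set Implicit Arguments. Unset Strict Implicit. Unset Printing Implicit Defensive.
Import Order.TTheory GRing.Theory Num.Theory.
Import numFieldNormedType.Exports.
Local Open Scope classical_set_scope.
Local Open Scope ring_scope.

(* R^n is represented by row vectors 'rV[R]_n (so that the library's   *)
(* Jacobian 'J applies).  We equip it with the sigma-algebra generated *)
(* by the coordinate maps (= the Borel sigma-algebra of R^n).          *)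
Definition measure_rV_display : measure_display -> measure_display.
Proof. exact. Qed.

Section rV_measurable.
Context (R : realType) (n : nat).
Let coors : 'I_n -> 'rV[R]_n -> R := fun i v => v ord0 i.
Let rV_set0 : g_sigma_preimage coors set0.
Proof. exact: sigma_algebra0. Qed.
Let rV_setC A : g_sigma_preimage coors A -> g_sigma_preimage coors (~` A).
Proof. exact: sigma_algebraC. Qed.
Let rV_bigcup (F : _^nat) : (forall i, g_sigma_preimage coors (F i)) ->
  g_sigma_preimage coors (\bigcup_i (F i)).
Proof. exact: sigma_algebra_bigcup. Qed.
HB.instance Definition _ :=
  @isMeasurable.Build (measure_rV_display default_measure_display)
  'rV[R]_n (g_sigma_preimage coors) rV_set0 rV_setC rV_bigcup.
End rV_measurable.

Section vae_defs.
Context (R : realType).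
Local Open Scope ereal_scope.

Definition box_rV n (a b : 'rV[R]_n) : set 'rV[R]_n :=
  [set v | forall i, (a ord0 i <= v ord0 i <= b ord0 i)%R].

(* lam is the Lebesgue measure on R^n: it gives every box its volume
   (this characterizes Lebesgue measure uniquely on the Borel sets). *)
Definition is_lebesgue_rV n (lam : {measure set 'rV[R]_n -> \bar R}) : Prop :=
  forall a b : 'rV[R]_n, (forall i, (a ord0 i <= b ord0 i)%R) ->
    lam (box_rV a b) = (\prod_(i < n) (b ord0 i - a ord0 i))%:E.

Definition is_density n (lam : {measure set 'rV[R]_n -> \bar R})
    (f : 'rV[R]_n -> R) : Prop :=
  [/\ forall z, (0 <= f z)%R, measurable_fun [set: 'rV[R]_n] f
    & \int[lam]_z (f z)%:E = 1].

(* decoder = conditional density p_{x|z}(x'|z) = dec z x' on the data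
   space R^m (w.r.t. the Lebesgue measure lamx) *)
Definition is_decoder d m (lamx : {measure set 'rV[R]_m -> \bar R})
    (dec : 'rV[R]_d -> 'rV[R]_m -> R) : Prop :=
  [/\ forall z x, (0 <= dec z x)%R,
      measurable_fun [set: 'rV[R]_d * 'rV[R]_m] (fun zx => dec zx.1 zx.2)
    & forall z, \int[lamx]_x (dec z x)%:E = 1].

Definition elog (y : R) : \bar R := if (0 < y)%R then (ln y)%:E else -oo.

Definition klterm (a b : R) : \bar R :=
  if (a <= 0)%R then 0 else if (b <= 0)%R then +oo else (a * ln (a / b))%:E.

Definition KL d (lam : {measure set 'rV[R]_d -> \bar R}) (q p : 'rV[R]_d -> R)
  : \bar R := \int[lam]_z klterm (q z) (p z).

Definition ELL d m (lam : {measure set 'rV[R]_d -> \bar R}) (q : 'rV[R]_d -> R)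
    (dec : 'rV[R]_d -> 'rV[R]_m -> R) (x : 'rV[R]_m) : \bar R :=
  \int[lam]_z ((q z)%:E * elog (dec z x)).

Definition betaVAE d m (lam : {measure set 'rV[R]_d -> \bar R}) (beta : R)
    (pz : 'rV[R]_d -> R) (x : 'rV[R]_m) (q : 'rV[R]_d -> R)
    (dec : 'rV[R]_d -> 'rV[R]_m -> R) : \bar R :=
  ELL lam q dec x - beta%:E * KL lam q pz.

Definition has_offdiag_jacobian d (r : 'rV[R]_d -> 'rV[R]_d) : Prop :=
  exists (z : 'rV[R]_d) (i j : 'I_d), i != j /\ (jacobian r z i j != 0)%R.

(* The last two clauses
   (measurability, preservation of Lebesgue measure) are consequences of
   the previous ones (change of variables / area formula), stated
   explicitly since multivariate change of variables is not in the library. *)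
Definition mixing_transform d (lam : {measure set 'rV[R]_d -> \bar R})
    (r : 'rV[R]_d -> 'rV[R]_d) : Prop :=
  [/\ bijective r,
      forall z, differentiable r z,
      forall z, `|\det (jacobian r z)|%R = 1%R,
      has_offdiag_jacobian r
    & measurable_fun [set: 'rV[R]_d] r /\
      (forall A, measurable A -> lam (r @^-1` A) = lam A)].

(* q' is the density of the pushforward r#q (for r with |det J| = 1):
   q' = q o r^{-1} *)
Definition is_pushdens d (r : 'rV[R]_d -> 'rV[R]_d) (q q' : 'rV[R]_d -> R)
  : Prop :=
  exists s : 'rV[R]_d -> 'rV[R]_d, [/\ cancel r s, cancel s r & q' = q \o s].

Definition prior_invariant d (lam : {measure set 'rV[R]_d -> \bar R})
    (pz : 'rV[R]_d -> R) (r : 'rV[R]_d -> 'rV[R]_d) : Prop :=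
  forall A, measurable A ->
    \int[lam]_(z in r @^-1` A) (pz z)%:E = \int[lam]_(z in A) (pz z)%:E.

Definition enlarged_family d (Rs : set ('rV[R]_d -> 'rV[R]_d))
    (Q : set ('rV[R]_d -> R)) : set ('rV[R]_d -> R) :=
  [set q' | (exists q r, [/\ Q q, Rs r & is_pushdens r q q']) \/ Q q'].

End vae_defs.

(* Main.v *)
Require Import Defs.
From HB Require Import structures.
From mathcomp Require Import all_boot all_order all_algebra.
From mathcomp Require Import all_classical all_reals all_analysis.
From mathcomp Require Import measurable_realfun.
Import Order.TTheory GRing.Theory Num.Theory.
Import numFieldNormedType.Exports.
Local Open Scope classical_set_scope.
Local Open Scope ring_scope.

Section helpers.
Context (R : realType).
Local Open Scope ereal_scope.

Lemma cov_int d0 (T : measurableType d0) (mu : {measure set T -> \bar R})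
  (r : T -> T) (mr : measurable_fun setT r)
  (pres : forall A, measurable A -> mu (r @^-1` A) = mu A)
  (D : set T) (mD : measurable D) (f : T -> \bar R) (mf : measurable_fun D f) :
  \int[mu]_(x in r @^-1` D) f (r x) = \int[mu]_(y in D) f y.
Proof.
have -> : \int[mu]_(y in D) f y = \int[pushforward mu r]_(y in D) f y.
    by apply: eq_measure_integral => A mA _ /=; symmetry; exact: pres.
rewrite [RHS]integralE [LHS]integralE.
rewrite (ge0_integral_pushforward mr mu mD (measurable_funepos mf)); last first.
  by move=> y _; exact: funepos_ge0.
rewrite (ge0_integral_pushforward mr mu mD (measurable_funeneg mf)); last first.
  by move=> y _; exact: funeneg_ge0.
have -> : (fun x0 => f (r x0))^\+ = f^\+ \o r by rewrite -funepos_comp.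
have -> : (fun x0 => f (r x0))^\- = f^\- \o r by rewrite -funeneg_comp.
by [].
Qed.
Arguments cov_int {d0 T mu r} mr pres {D} mD {f} mf.

Lemma m_elog d0 (T : measurableType d0) (F : T -> R) :
  measurable_fun setT F -> measurable_fun setT (fun z => elog (F z)).
Proof.
move=> mF; rewrite /elog.
apply: measurable_fun_ifT.
- by apply: measurable_fun_ltr => //; exact: measurable_cst.
- by apply: measurableT_comp => //; apply: measurableT_comp => //; exact: measurable_ln.
- exact: measurable_cst.
Qed.

Lemma klterm_alt (a b : R) : klterm a b =
  if (a <= 0)%R then 0 else if (b <= 0)%R then +oo else (a * (ln a - ln b))%:E.
Proof.
rewrite /klterm; case: ifPn => // a0; rewrite -ltNge in a0.
case: ifPn => // b0; rewrite -ltNge in b0.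
by rewrite ln_div // posrE.
Qed.

Lemma m_klterm d0 (T : measurableType d0) (F G : T -> R) :
  measurable_fun setT F -> measurable_fun setT G ->
  measurable_fun setT (fun z => klterm (F z) (G z)).
Proof.
move=> mF mG.
have -> : (fun z => klterm (F z) (G z)) = (fun z =>
  if (F z <= 0)%R then 0 else if (G z <= 0)%R then +oo else (F z * (ln (F z) - ln (G z)))%:E).
  by apply: funext => z; rewrite klterm_alt.
apply: measurable_fun_ifT.
- by apply: measurable_fun_ler => //; exact: measurable_cst.
- exact: measurable_cst.
apply: measurable_fun_ifT.
- by apply: measurable_fun_ler => //; exact: measurable_cst.
- exact: measurable_cst.
apply: measurableT_comp => //.
apply: measurable_funM => //.
apply: measurable_funB.
- by apply: measurableT_comp => //; exact: measurable_ln.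
- by apply: measurableT_comp => //; exact: measurable_ln.
Qed.


Lemma key_lemma (d m : nat) (lam : {measure set 'rV[R]_d -> \bar R}) (beta : R)
  (pz : 'rV[R]_d -> R) (x : 'rV[R]_m) (r s : 'rV[R]_d -> 'rV[R]_d)
  (rs : cancel r s) (sr : cancel s r)
  (mr : measurable_fun setT r)
  (pres : forall A, measurable A -> lam (r @^-1` A) = lam A)
  (ms : measurable_fun setT s)
  (Hpz : is_density lam pz) (Hprior : prior_invariant lam pz s)
  (q : 'rV[R]_d -> R) (mq : measurable_fun setT q)
  (dec : 'rV[R]_d -> 'rV[R]_m -> R)
  (mdec : measurable_fun setT (fun z => dec z x)) :
  betaVAE lam beta pz x q (dec \o r) = betaVAE lam beta pz x (q \o s) dec.
Proof.
case: Hpz => pz0 mpz ipz.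
rewrite /betaVAE; congr (_ - _ * _).
  rewrite /ELL.
  have mf : measurable_fun setT (fun w => ((q \o s) w)%:E * elog (dec w x)).
    apply: emeasurable_funM.
      by apply: measurableT_comp => //; exact: measurableT_comp.
    exact: m_elog.
  rewrite -(cov_int mr pres measurableT mf) preimage_setT.
  by apply: eq_integral => z _ /=; rewrite rs.
rewrite /KL.
have mf : measurable_fun setT (fun w => klterm ((q \o s) w) (pz w)).
  by apply: m_klterm => //; exact: measurableT_comp.
rewrite -(cov_int mr pres measurableT mf) preimage_setT.
under [RHS]eq_integral do rewrite /= rs.
have hae : ae_eq lam setT (EFin \o pz) (EFin \o (pz \o r)).
  apply: integral_ae_eq => //.
  - apply/integrableP; split.
      exact: measurableT_comp.
    have -> : (fun x0 => `|(EFin \o pz) x0|) = (fun x0 => (pz x0)%:E).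
      by apply: funext => z /=; rewrite ger0_norm.
    by rewrite ipz ltry.
  - by apply: measurableT_comp => //; exact: measurableT_comp.
  - move=> E _ mE.
    have msE : measurable (s @^-1` E) by rewrite -[_ @^-1` _]setTI; exact: ms.
    have h1 := Hprior E mE.
    have mEpz : measurable_fun setT (EFin \o pz) by exact: measurableT_comp.
    have h2 := @cov_int _ _ _ _ mr pres _ msE (EFin \o pz) (measurable_funTS mEpz).
    have h3 : r @^-1` (s @^-1` E) = E by apply/seteqP; split => z /=; rewrite rs.
    rewrite h3 in h2.
    rewrite /prior_invariant in h1.
    apply: esym; rewrite /= in h2; rewrite h2. exact: h1.
apply: ae_eq_integral => //.
- by apply: m_klterm.
- by apply: m_klterm => //; exact: measurableT_comp.
move: hae; apply: filterS => z /= H Dz.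
by case: (H Dz) => ->.
Qed.

End helpers.

Theorem theorem1 (R : realType) (d m : nat)
  (lam : {measure set 'rV[R]_d -> \bar R})
  (lamx : {measure set 'rV[R]_m -> \bar R})
  (Hlam : is_lebesgue_rV lam) (Hlamx : is_lebesgue_rV lamx)
  (pz : 'rV[R]_d -> R) (Hpz : is_density lam pz)
  (x : 'rV[R]_m) (beta : R) (Hbeta : 0 < beta)
  (Rs : set ('rV[R]_d -> 'rV[R]_d))
  (HRmix : forall r, Rs r -> mixing_transform lam r)
  (HRprior : forall r, Rs r -> prior_invariant lam pz r)
  (HRinv : forall r s, Rs r -> cancel r s -> cancel s r -> Rs s)
  (Q : set ('rV[R]_d -> R)) (HQ : forall q, Q q -> is_density lam q)
  (qstar : 'rV[R]_d -> R) (decstar : 'rV[R]_d -> 'rV[R]_m -> R)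
  (Hqstar : Q qstar) (Hdecstar : is_decoder lamx decstar)
  (Hmax : forall q dec, Q q -> is_decoder lamx dec ->
     (betaVAE lam beta pz x q dec <= betaVAE lam beta pz x qstar decstar)%E)
  (Hdisj : forall q r q', Q q -> Rs r -> is_pushdens r q q' -> ~ Q q')
  (Huniq : exists! q, enlarged_family Rs Q q /\
     (forall q', enlarged_family Rs Q q' ->
        (betaVAE lam beta pz x q' decstar <= betaVAE lam beta pz x q decstar)%E)) :
  forall r, Rs r -> forall q, Q q ->
    (betaVAE lam beta pz x q (decstar \o r) < betaVAE lam beta pz x qstar decstar)%E.
Proof.
have decr : forall r, Rs r -> is_decoder lamx (decstar \o r).
  move=> r Hr; case: (HRmix r Hr) => _ _ _ _ [mr _].
  case: Hdecstar => dec0 mdec idec; split.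
  - by move=> z x'; exact: dec0.
  - have -> : (fun zx : 'rV[R]_d * 'rV[R]_m => (decstar \o r) zx.1 zx.2) =
        (fun zx => decstar zx.1 zx.2) \o (fun zx => (r zx.1, zx.2)) by [].
    apply: measurableT_comp => //.
    apply: measurable_fun_pair => //.
    exact: measurableT_comp.
  - by move=> z; exact: idec.
have mdecx : measurable_fun setT (fun z => decstar z x).
  case: Hdecstar => _ mdec _.
  exact: (measurable_fun_pair1 (f := fun zx : 'rV[R]_d * 'rV[R]_m => decstar zx.1 zx.2)).
have keyL : forall r s q, Rs r -> cancel r s -> cancel s r -> Q q ->
    betaVAE lam beta pz x q (decstar \o r) = betaVAE lam beta pz x (q \o s) decstar.
  move=> r s q Hr rs sr Hq.
  have Hs := HRinv r s Hr rs sr.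
  case: (HRmix r Hr) => _ _ _ _ [mr pres].
  case: (HRmix s Hs) => _ _ _ _ [ms _].
  case: (HQ q Hq) => _ mq _.
  apply: key_lemma => //.
  exact: HRprior.
have bound : forall q', enlarged_family Rs Q q' ->
    (betaVAE lam beta pz x q' decstar <= betaVAE lam beta pz x qstar decstar)%E.
  move=> q' [[q1 [r1 [Hq1 Hr1 [s1 [rs1 sr1 ->]]]]]|Hq'].
  - rewrite -(keyL r1 s1 q1) //.
    by apply: Hmax => //; exact: decr.
  - exact: Hmax.
case: Huniq => q0 [[Hq0 Hmax0] Huq].
have q0E : q0 = qstar.
  apply: Huq; split => //; by right.
move=> r Hr q Hq.
case: (HRmix r Hr) => [[s rs sr]] _ _ _ _.
have pd : is_pushdens r q (q \o s) by exists s.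
have enl : enlarged_family Rs Q (q \o s) by left; exists q, r.
rewrite (keyL r s q) //.
rewrite lt_neqAle bound // andbT.
apply/negP => /eqP Heq.
have : q0 = q \o s.
  apply: Huq; split => // q' Hq'.
  by rewrite Heq; exact: bound.
rewrite q0E => Eq.
by apply: (Hdisj q r (q \o s) Hq Hr pd); rewrite -Eq.
Qed.
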